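(* Let $M$, $A$ and $B$ be three packed matrices. Then, (1) $\mathrm{ov}(A, B) \leq_{\mathrm{M}} M$ if and only if there are two packed matrices $A'$ and $B'$ such that $A \leq_{\mathrm{M}} A'$, $B \leq_{\mathrm{M}} B'$, and $M \in \mathrm{Sh}_c(A', B')$; (2) $M \leq_{\mathrm{M}} \mathrm{un}(A, B)$ if and only if there are two packed matrices $A'$ and $B'$ such that $A' \leq_{\mathrm{M}} A$, $B' \leq_{\mathrm{M}} B$, and $M \in \mathrm{Sh}_c(A', B')$.
   Context: Let $k \geq 1$ and $A_k := \{0,1,\dots,k\}$. A ($k$-)packed matrix of size $n$ is an $n\times n$ matrix with entries in $A_k$ with at least one nonzero entry in each row and column. For packed $M_1, M_2$ of sizes $n_1, n_2$: $\mathrm{ov}(M_1,M_2) := \begin{pmatrix} M_1 & 0 \\ 0 & M_2\end{pmatrix}$ (over operator) and $\mathrm{un}(M_1,M_2) := \begin{pmatrix} 0 & M_1 \\ M_2 & 0 \end{pmatrix}$ (under operator), with zero blocks of appropriate sizes. The column shifted shuffle $\mathrm{Sh}_c(M_1,M_2)$ is the set of all matrices obtained by shuffling the columns of $M_1$ with an $n_2 \times n_1$ zero block placed below it, with the columns of $M_2$ with an $n_1 \times n_2$ zero block placed above it. Define $\to$ on packed matrices of size $n$: $M_1 \to M_2$ if there is $i \in [n-1]$ such that, with $s$ the number of $0$ ending the $i$th column of $M_1$ and $p$ the number of $0$ starting its $(i+1)$st column, $s + p \geq n$ and $M_2$ is obtained from $M_1$ by exchanging its $i$th and $(i+1)$st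 columns. $\leq_{\mathrm{M}}$ is the reflexive and transitive closure of $\to$. *)

(* Defs.v *)
From mathcomp Require Import all_boot all_order all_algebra all_fingroup.
From Stdlib Require Import Relations.
Set Implicit Arguments. Unset Strict Implicit. Unset Printing Implicit Defensive.

(* Matrices with natural-number entries; entries are required to lie in
   A_k = {0,...,k} by the predicate [packed]. *)

Definition packed (k n : nat) (M : 'M[nat]_n) : Prop :=
  (forall i j, M i j <= k) /\
  (forall i, exists j, M i j != 0) /\
  (forall j, exists i, M i j != 0).

Definition ov n1 n2 (M1 : 'M[nat]_n1) (M2 : 'M[nat]_n2) : 'M[nat]_(n1 + n2) :=
  block_mx M1 0 0 M2.

(* under operator: [[0, M1], [M2, 0]]; the block matrix has type
   'M_(n1+n2, n2+n1), cast to the square type 'M_(n1+n2). *)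
Definition un n1 n2 (M1 : 'M[nat]_n1) (M2 : 'M[nat]_n2) : 'M[nat]_(n1 + n2) :=
  castmx (erefl (n1 + n2), addnC n2 n1)
    (block_mx (0 : 'M[nat]_(n1, n2)) M1 M2 (0 : 'M[nat]_(n2, n1))).

(* column shifted shuffle: M is obtained by placing column j of ov M1 M2
   at position s j, where s keeps the relative order of the columns of M1
   (first n1 columns) and the relative order of those of M2. *)
Definition in_Shc n1 n2 (M : 'M[nat]_(n1 + n2))
    (M1 : 'M[nat]_n1) (M2 : 'M[nat]_n2) : Prop :=
  exists s : {perm 'I_(n1 + n2)},
    (forall a b : 'I_n1, a < b -> s (lshift n2 a) < s (lshift n2 b)) /\
    (forall a b : 'I_n2, a < b -> s (rshift n1 a) < s (rshift n1 b)) /\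
    (forall i j, M i (s j) = ov M1 M2 i j).

Definition colseq n (M : 'M[nat]_n) (j : 'I_n) : seq nat :=
  [seq M r j | r <- enum 'I_n].

Definition lead0 (s : seq nat) : nat := find (fun x => x != 0) s.
Definition trail0 (s : seq nat) : nat := lead0 (rev s).

Definition mstep n (M1 M2 : 'M[nat]_n) : Prop :=
  exists i j : 'I_n, val j = (val i).+1 /\
    n <= trail0 (colseq M1 i) + lead0 (colseq M1 j) /\
    M2 = xcol i j M1.

Definition leM n : relation 'M[nat]_n := clos_refl_trans _ (@mstep n).

(* Main.v *)
Require Import Defs.
From mathcomp Require Import all_boot all_order all_algebra all_fingroup.
From mathcomp Require Import zify.
From Stdlib Require Import Relations.
Set Implicit Arguments. Unset Strict Implicit. Unset Printing Implicit Defensive.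

Lemma find_ge (s : seq nat) q : q <= size s ->
  (q <= find (fun x => x != 0) s <-> forall r, r < q -> nth 0 s r = 0).
Proof.
move=> hq; split.
- move=> h r hr; apply/eqP; apply/negbFE.
  exact: (before_find 0 (leq_trans hr h)).
- move=> h; rewrite leqNgt; apply/negP => hf.
  have hs : has (fun x => x != 0) s by rewrite has_find; exact: leq_trans hf hq.
  by move: (nth_find 0 hs); rewrite h.
Qed.

Lemma size_colseq n (M : 'M[nat]_n) j : size (colseq M j) = n.
Proof. by rewrite /colseq size_map size_enum_ord. Qed.

Lemma nth_colseq n (M : 'M[nat]_n) j (r : 'I_n) : nth 0 (colseq M j) r = M r j.
Proof. by rewrite /colseq (nth_map r) ?size_enum_ord ?nth_ord_enum. Qed.

Lemma lead0_ge n (M : 'M[nat]_n) j q : q <= n ->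
  (q <= lead0 (colseq M j) <-> forall r : 'I_n, r < q -> M r j = 0).
Proof.
move=> hq; rewrite /lead0 find_ge ?size_colseq //; split.
- by move=> h r hr; rewrite -nth_colseq h.
- move=> h r hr; have hrn : r < n by exact: leq_trans hr hq.
  by rewrite -[r]/(val (Ordinal hrn)) nth_colseq h.
Qed.

Lemma trail0_ge n (M : 'M[nat]_n) j q : q <= n ->
  (q <= trail0 (colseq M j) <-> forall r : 'I_n, n - q <= r -> M r j = 0).
Proof.
move=> hq; rewrite /trail0 /lead0 find_ge ?size_rev ?size_colseq //; split.
- move=> h r hr.
  have h1 : n - r.+1 < q by have := ltn_ord r; lia.
  have := h _ h1; rewrite nth_rev ?size_colseq; last by lia.
  have -> : n - (n - r.+1).+1 = r by have := ltn_ord r; lia.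
  by rewrite nth_colseq.
- move=> h r hr; have hrn : n - r.+1 < n by lia.
  rewrite nth_rev ?size_colseq; last by lia.
  rewrite -[n - r.+1]/(val (Ordinal hrn)) nth_colseq h //=; lia.
Qed.

Definition cnd n (M : 'M[nat]_n) (i j : 'I_n) :=
  exists q, q <= n /\ (forall r : 'I_n, q <= r -> M r i = 0) /\
            (forall r : 'I_n, r < q -> M r j = 0).

Lemma cndE n (M : 'M[nat]_n) i j :
  n <= trail0 (colseq M i) + lead0 (colseq M j) <-> cnd M i j.
Proof.
split.
- move=> h; set t := trail0 _ in h; set l := lead0 _ in h.
  exists (n - minn t n); split; first lia; split.
  + have := (trail0_ge M i (geq_minr t n)).1 (geq_minl _ _).
    move=> H r hr; apply: H; lia.
  + have := (lead0_ge M j (leq_subr (minn t n) n)).1.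
    move=> H r hr; apply: H => //; lia.
- case=> q [hq [h1 h2]].
  have a1 : n - q <= trail0 (colseq M i).
    by apply/(trail0_ge M i (leq_subr q n)) => r hr; apply: h1; lia.
  have a2 : q <= lead0 (colseq M j) by apply/(lead0_ge M j hq).
  lia.
Qed.
Definition shufM n (s : {perm 'I_n}) (N : 'M[nat]_n) : 'M[nat]_n :=
  \matrix_(i, j) N i (s^-1%g j).

Lemma shufME n (s : {perm 'I_n}) N i x : shufM s N i (s x) = N i x.
Proof. by rewrite mxE permK. Qed.

Lemma xcol_shufM n (p q : 'I_n) s N :
  xcol p q (shufM s N) = shufM (s * tperm p q)%g N.
Proof. by apply/matrixP => i j; rewrite !mxE invMg permM tpermV. Qed.

Lemma tperm_inj_conj (T : finType) (s : {perm T}) x y z :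
  s (tperm x y z) = tperm (s x) (s y) (s z).
Proof.
case: (tpermP x y z) => [->|->|/eqP hx /eqP hy]; rewrite ?tpermL ?tpermR //.
by rewrite tpermD // (inj_eq perm_inj) eq_sym.
Qed.

Lemma shufM_xcol n (s : {perm 'I_n}) N x y :
  shufM s (xcol x y N) = shufM (s * tperm (s x) (s y))%g N.
Proof.
apply/matrixP => i j; rewrite !mxE invMg permM tpermV; congr (N i _).
have -> : j = s (s^-1%g j) by rewrite permKV.
by rewrite permK -tperm_inj_conj permK.
Qed.

Lemma tperm_inj m n (f : 'I_m -> 'I_n) a b c : injective f ->
  tperm (f a) (f b) (f c) = f (tperm a b c).
Proof.
move=> finj; case: (tpermP a b c) => [->|->|/eqP ha /eqP hb];
  rewrite ?tpermL ?tpermR // tpermD // (inj_eq finj) eq_sym //; exact/eqP.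
Qed.

Lemma splitLR n1 n2 (x : 'I_(n1 + n2)) :
  (exists a, x = lshift n2 a) \/ (exists b, x = rshift n1 b).
Proof. by rewrite -(splitK x); case: split => [a|b]; [left; exists a|right; exists b]. Qed.

Section OV.
Variables (n1 n2 : nat) (A : 'M[nat]_n1) (B : 'M[nat]_n2).

Lemma ovLL a c : ov A B (lshift n2 a) (lshift n2 c) = A a c.
Proof. by rewrite /ov block_mxEul. Qed.
Lemma ovLR a c : ov A B (lshift n2 a) (rshift n1 c) = 0.
Proof. by rewrite /ov block_mxEur mxE. Qed.
Lemma ovRL a c : ov A B (rshift n1 a) (lshift n2 c) = 0.
Proof. by rewrite /ov block_mxEdl mxE. Qed.
Lemma ovRR a c : ov A B (rshift n1 a) (rshift n1 c) = B a c.
Proof. by rewrite /ov block_mxEdr. Qed.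

Lemma cndLL a b : cnd (ov A B) (lshift n2 a) (lshift n2 b) <-> cnd A a b.
Proof.
split.
- case=> q [hq [h1 h2]]; exists (minn q n1); split; first exact: geq_minr.
  split.
  + move=> r hr; rewrite -ovLL; apply: h1 => /=.
    have := ltn_ord r; lia.
  + move=> r hr; rewrite -ovLL; apply: h2 => /=; lia.
- case=> q [hq [h1 h2]]; exists q; split; first lia; split.
  + move=> r; case: (splitLR r) => [[r' ->]|[r' ->]] /= hr.
    * by rewrite ovLL h1.
    * by rewrite ovRL.
  + move=> r; case: (splitLR r) => [[r' ->]|[r' ->]] /= hr.
    * by rewrite ovLL h2.
    * lia.
Qed.

Lemma cndRR a b : cnd (ov A B) (rshift n1 a) (rshift n1 b) <-> cnd B a b.
Proof.
split.
- case=> q [hq [h1 h2]]; exists (q - n1); split; first lia.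
  split.
  + move=> r hr; rewrite -ovRR; apply: h1 => /=; lia.
  + move=> r hr; rewrite -ovRR; apply: h2 => /=; lia.
- case=> q [hq [h1 h2]]; exists (n1 + q); split; first lia; split.
  + move=> r; case: (splitLR r) => [[r' ->]|[r' ->]] /= hr.
    * by rewrite ovLR.
    * rewrite ovRR h1 //; lia.
  + move=> r; case: (splitLR r) => [[r' ->]|[r' ->]] /= hr.
    * by rewrite ovLR.
    * rewrite ovRR h2 //; lia.
Qed.

Lemma cndLR a b : cnd (ov A B) (lshift n2 a) (rshift n1 b).
Proof.
exists n1; split; first lia; split.
- move=> r; case: (splitLR r) => [[r' ->]|[r' ->]] /= hr.
  + have := ltn_ord r'; lia.
  + by rewrite ovRL.
- move=> r; case: (splitLR r) => [[r' ->]|[r' ->]] /= hr.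
  + by rewrite ovLR.
  + lia.
Qed.

Lemma cndRL a b : (exists r, B r a != 0) -> (exists r, A r b != 0) ->
  ~ cnd (ov A B) (rshift n1 a) (lshift n2 b).
Proof.
move=> [r0 h0] [r1 h1] [q [hq [H1 H2]]].
case: (leqP q (n1 + r0)) => hq0.
- by move: (H1 (rshift n1 r0) hq0); rewrite ovRR; move/eqP: h0.
- have : lshift n2 r1 < q by rewrite /=; have := ltn_ord r1; lia.
  by move/H2; rewrite ovLL; move/eqP: h1.
Qed.

End OV.

Section OV2.
Variables (n1 n2 : nat) (A : 'M[nat]_n1) (B : 'M[nat]_n2).
Lemma ov_xcolL a b : ov (xcol a b A) B = xcol (lshift n2 a) (lshift n2 b) (ov A B).
Proof.
apply/matrixP => i j; rewrite [RHS]mxE.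
case: (splitLR j) => [[c ->]|[c ->]].
- rewrite tperm_inj //; last exact: lshift_inj.
  case: (splitLR i) => [[r ->]|[r ->]]; by rewrite ?ovLL ?ovRL // ?mxE.
- rewrite tpermD; last 2 first.
  + by apply/eqP => /(f_equal val) /=; have := ltn_ord a; lia.
  + by apply/eqP => /(f_equal val) /=; have := ltn_ord b; lia.
  case: (splitLR i) => [[r ->]|[r ->]]; by rewrite ?ovLR ?ovRR.
Qed.

Lemma ov_xcolR a b : ov A (xcol a b B) = xcol (rshift n1 a) (rshift n1 b) (ov A B).
Proof.
apply/matrixP => i j; rewrite [RHS]mxE.
case: (splitLR j) => [[c ->]|[c ->]].
- rewrite tpermD; last 2 first.
  + by apply/eqP => /(f_equal val) /=; have := ltn_ord c; lia.
  + by apply/eqP => /(f_equal val) /=; have := ltn_ord c; lia.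
  case: (splitLR i) => [[r ->]|[r ->]]; by rewrite ?ovLL ?ovRL.
- rewrite tperm_inj //; last exact: rshift_inj.
  case: (splitLR i) => [[r ->]|[r ->]]; by rewrite ?ovLR ?ovRR // ?mxE.
Qed.
End OV2.

Definition mono n1 n2 (s : {perm 'I_(n1 + n2)}) :=
  (forall a b : 'I_n1, a < b -> s (lshift n2 a) < s (lshift n2 b)) /\
  (forall a b : 'I_n2, a < b -> s (rshift n1 a) < s (rshift n1 b)).

Lemma shc_of n1 n2 (A : 'M[nat]_n1) (B : 'M[nat]_n2) s :
  mono s -> in_Shc (shufM s (ov A B)) A B.
Proof. by case=> h1 h2; exists s; split => //; split => // i j; rewrite shufME. Qed.

Lemma shc_to n1 n2 (M : 'M[nat]_(n1 + n2)) (A : 'M[nat]_n1) (B : 'M[nat]_n2) :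
  in_Shc M A B -> exists s, mono s /\ M = shufM s (ov A B).
Proof.
case=> s [h1 [h2 h3]]; exists s; split => //.
apply/matrixP => i j; rewrite mxE -h3 permKV //.
Qed.

Lemma cnd_shufM n (s : {perm 'I_n}) N x y :
  cnd (shufM s N) (s x) (s y) <-> cnd N x y.
Proof.
split; case=> q [hq [h1 h2]]; exists q; split => //; split => r hr.
- by rewrite -(shufME s); apply: h1.
- by rewrite -(shufME s); apply: h2.
- by rewrite shufME; apply: h1.
- by rewrite shufME; apply: h2.
Qed.

Lemma adj_mono m (f : 'I_m -> nat) : (forall a b : 'I_m, a < b -> f a < f b) ->
  forall a b : 'I_m, (f a).+1 = f b -> nat_of_ord b = (nat_of_ord a).+1.
Proof.
move=> h a b e.
case: (ltngtP a b) => hab.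
- case: (ltngtP (nat_of_ord a).+1 b) => h2 //.
  + have hc : (nat_of_ord a).+1 < m by have := ltn_ord b; lia.
    have := h a (Ordinal hc) (ltnSn _); have := h (Ordinal hc) b h2; lia.
  + lia.
- have := h b a hab; lia.
- have : a = b by apply: val_inj.
  move=> eab; move: e; rewrite eab; lia.
Qed.

Lemma mono_tp m n (f : 'I_m -> 'I_n) (p q : 'I_n) : nat_of_ord q = (nat_of_ord p).+1 ->
  (forall a b : 'I_m, a < b -> f a < f b) ->
  (forall c, f c != q) \/ (forall c, f c != p) ->
  (forall a b : 'I_m, a < b -> tperm p q (f a) < tperm p q (f b)).
Proof.
move=> hpq h hn a b hab; have := h a b hab.
have E : forall u : 'I_n,
  (nat_of_ord u = p /\ nat_of_ord (tperm p q u) = q) \/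
  (nat_of_ord u = q /\ nat_of_ord (tperm p q u) = p) \/
  (nat_of_ord u <> p /\ nat_of_ord u <> q /\ nat_of_ord (tperm p q u) = u).
  move=> u; case: tpermP => [->|->|h1 h2]; [by left|by right; left|].
  right; right; split; [by move=> e; move: h1; rewrite (_ : u = p) ?eqxx //; apply: ord_inj|].
  split; [by move=> e; move: h2; rewrite (_ : u = q) ?eqxx //; apply: ord_inj|done].
have hn' : (forall c, nat_of_ord (f c) <> q) \/ (forall c, nat_of_ord (f c) <> p).
  case: hn => hn; [left|right] => c e; move: (hn c); rewrite -(inj_eq val_inj) /= e eqxx //.
have := E (f a); have := E (f b).
case: hn' => hn'; have := hn' a; have := hn' b; lia.
Qed.

Lemma xcolKK n (p q : 'I_n) (M : 'M[nat]_n) : xcol p q (xcol p q M) = M.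
Proof. by apply/matrixP => i j; rewrite !mxE tpermK. Qed.

Lemma packed_xcol k n (A : 'M[nat]_n) a b : packed k A -> packed k (xcol a b A).
Proof.
case=> h1 [h2 h3]; split; [|split].
- by move=> i j; rewrite mxE.
- move=> i; case: (h2 i) => j hj; exists (tperm a b j); by rewrite mxE tpermK.
- move=> j; case: (h3 (tperm a b j)) => i hi; exists i; by rewrite mxE.
Qed.

Lemma mstep_intro n (M : 'M[nat]_n) i j :
  cnd M i j -> nat_of_ord j = (nat_of_ord i).+1 -> mstep M (xcol i j M).
Proof. by move=> hc hij; exists i, j; split => //; split => //; apply/cndE. Qed.

Lemma lsh_neq_rsh n1 n2 (a : 'I_n1) (b : 'I_n2) : lshift n2 a != rshift n1 b.
Proof. by apply/eqP => /(f_equal val) /=; have := ltn_ord a; lia. Qed.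

Lemma mono_swapLR n1 n2 (s : {perm 'I_(n1 + n2)}) (p q : 'I_(n1 + n2)) a b :
  mono s -> nat_of_ord q = (nat_of_ord p).+1 ->
  s (lshift n2 a) = p -> s (rshift n1 b) = q -> mono (s * tperm p q).
Proof.
move=> [m1 m2] hpq ea eb; split => c d hcd; rewrite !permM.
- apply: (@mono_tp _ _ (fun c => s (lshift n2 c)) p q hpq m1 _ c d hcd).
  by left => e; rewrite -eb (inj_eq perm_inj) lsh_neq_rsh.
- apply: (@mono_tp _ _ (fun c => s (rshift n1 c)) p q hpq m2 _ c d hcd).
  by right => e; rewrite -ea (inj_eq perm_inj) eq_sym lsh_neq_rsh.
Qed.

Lemma mono_swapRL n1 n2 (s : {perm 'I_(n1 + n2)}) (p q : 'I_(n1 + n2)) a b :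
  mono s -> nat_of_ord q = (nat_of_ord p).+1 ->
  s (rshift n1 b) = p -> s (lshift n2 a) = q -> mono (s * tperm p q).
Proof.
move=> [m1 m2] hpq eb ea; split => c d hcd; rewrite !permM.
- apply: (@mono_tp _ _ (fun c => s (lshift n2 c)) p q hpq m1 _ c d hcd).
  by right => e; rewrite -eb (inj_eq perm_inj) lsh_neq_rsh.
- apply: (@mono_tp _ _ (fun c => s (rshift n1 c)) p q hpq m2 _ c d hcd).
  by left => e; rewrite -ea (inj_eq perm_inj) eq_sym lsh_neq_rsh.
Qed.

Lemma adjL n1 n2 (s : {perm 'I_(n1 + n2)}) (p q : 'I_(n1 + n2)) a b :
  mono s -> nat_of_ord q = (nat_of_ord p).+1 ->
  s (lshift n2 a) = p -> s (lshift n2 b) = q -> nat_of_ord b = (nat_of_ord a).+1.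
Proof.
move=> [m1 m2] hpq ea eb.
apply: (adj_mono (f := fun c => nat_of_ord (s (lshift n2 c)))) => //=.
by rewrite ea eb hpq.
Qed.

Lemma adjR n1 n2 (s : {perm 'I_(n1 + n2)}) (p q : 'I_(n1 + n2)) a b :
  mono s -> nat_of_ord q = (nat_of_ord p).+1 ->
  s (rshift n1 a) = p -> s (rshift n1 b) = q -> nat_of_ord b = (nat_of_ord a).+1.
Proof.
move=> [m1 m2] hpq ea eb.
apply: (adj_mono (f := fun c => nat_of_ord (s (rshift n1 c)))) => //=.
by rewrite ea eb hpq.
Qed.

Lemma FS k n1 n2 (A : 'M[nat]_n1) (B : 'M[nat]_n2) s Y :
  packed k A -> packed k B -> mono s -> mstep (shufM s (ov A B)) Y ->
  exists A1 B1 s1, [/\ packed k A1, packed k B1, leM A A1, leM B B1 &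
                    mono s1 /\ Y = shufM s1 (ov A1 B1)].
Proof.
move=> pA pB ms [p [q [hpq [hc ->]]]]; move: hpq => /= hpq.
move/cndE: hc => hc; rewrite xcol_shufM.
have ep : s (s^-1%g p) = p by rewrite permKV.
have eq : s (s^-1%g q) = q by rewrite permKV.
case: (splitLR (s^-1%g p)) => [[a ea]|[a ea]];
case: (splitLR (s^-1%g q)) => [[b eb]|[b eb]]; rewrite ea in ep; rewrite eb in eq.
- have hab := adjL ms hpq ep eq.
  rewrite -ep -eq in hc *; move/cnd_shufM/cndLL: hc => hc.
  exists (xcol a b A), B, s; split => //; first exact: packed_xcol.
  + exact: rt_step (mstep_intro hc hab).
  + exact: rt_refl.
  + by rewrite -shufM_xcol -ov_xcolL.
- exists A, B, (s * tperm p q)%g; split => //; try exact: rt_refl.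
  by split; [exact: mono_swapLR ms hpq ep eq|].
- exfalso; rewrite -ep -eq in hc; move/cnd_shufM: hc; apply: cndRL.
  + exact: pB.2.2 a.
  + exact: pA.2.2 b.
- have hab := adjR ms hpq ep eq.
  rewrite -ep -eq in hc *; move/cnd_shufM/cndRR: hc => hc.
  exists A, (xcol a b B), s; split => //; first exact: packed_xcol.
  + exact: rt_refl.
  + exact: rt_step (mstep_intro hc hab).
  + by rewrite -shufM_xcol -ov_xcolR.
Qed.

Lemma BS k n1 n2 (A : 'M[nat]_n1) (B : 'M[nat]_n2) s X :
  packed k A -> packed k B -> mono s -> mstep X (shufM s (ov A B)) ->
  exists A1 B1 s1, [/\ packed k A1, packed k B1, leM A1 A, leM B1 B &
                    mono s1 /\ X = shufM s1 (ov A1 B1)].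
Proof.
move=> pA pB ms [p [q [hpq [hc e]]]]; move: hpq => /= hpq.
have eX : X = xcol p q (shufM s (ov A B)) by rewrite e xcolKK.
move/cndE: hc => hc; rewrite {e} eX in hc *.
have ep : s (s^-1%g p) = p by rewrite permKV.
have eq : s (s^-1%g q) = q by rewrite permKV.
case: (splitLR (s^-1%g p)) => [[a ea]|[a ea]];
case: (splitLR (s^-1%g q)) => [[b eb]|[b eb]]; rewrite ea in ep; rewrite eb in eq.
- have hab := adjL ms hpq ep eq.
  rewrite -ep -eq xcol_shufM -shufM_xcol -ov_xcolL in hc *.
  move/cnd_shufM/cndLL: hc => hc.
  exists (xcol a b A), B, s; split => //; first exact: packed_xcol.
  + by have := rt_step _ _ _ _ (mstep_intro hc hab); rewrite xcolKK.
  + exact: rt_refl.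
- exfalso; rewrite xcol_shufM in hc.
  have e1 : (s * tperm p q)%g (rshift n1 b) = p by rewrite permM eq tpermR.
  have e2 : (s * tperm p q)%g (lshift n2 a) = q by rewrite permM ep tpermL.
  have : cnd (shufM (s * tperm p q)%g (ov A B)) ((s * tperm p q)%g (rshift n1 b)) ((s * tperm p q)%g (lshift n2 a)) by rewrite e1 e2.
  move/cnd_shufM; apply: cndRL.
  + exact: pB.2.2 b.
  + exact: pA.2.2 a.
- exists A, B, (s * tperm p q)%g; split => //; try exact: rt_refl.
  by split; [exact: mono_swapRL ms hpq ep eq | rewrite xcol_shufM].
- have hab := adjR ms hpq ep eq.
  rewrite -ep -eq xcol_shufM -shufM_xcol -ov_xcolR in hc *.
  move/cnd_shufM/cndRR: hc => hc.
  exists A, (xcol a b B), s; split => //; first exact: packed_xcol.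
  + exact: rt_refl.
  + by have := rt_step _ _ _ _ (mstep_intro hc hab); rewrite xcolKK.
Qed.

Lemma FC k n1 n2 (X Y : 'M[nat]_(n1 + n2)) : leM X Y ->
  forall (A : 'M[nat]_n1) (B : 'M[nat]_n2) s,
  packed k A -> packed k B -> mono s -> X = shufM s (ov A B) ->
  exists A1 B1 s1, [/\ packed k A1, packed k B1, leM A A1, leM B B1 &
                    mono s1 /\ Y = shufM s1 (ov A1 B1)].
Proof.
move=> h; have {h} := clos_rt_rt1n _ _ _ _ h; elim => [x | x y z hxy hyz IH] A B s pA pB ms ex.
- by exists A, B, s; split => //; exact: rt_refl.
- subst x; case: (FS pA pB ms hxy) => A1 [B1 [s1 [pA1 pB1 h1 h2 [ms1 ey]]]].
  case: (IH A1 B1 s1 pA1 pB1 ms1 ey) => A2 [B2 [s2 [pA2 pB2 h3 h4 [ms2 ez]]]].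
  exists A2, B2, s2; split => //; exact: rt_trans _ _ _ _ _ h1 h3 || exact: rt_trans _ _ _ _ _ h2 h4.
Qed.

Lemma BC k n1 n2 (X Y : 'M[nat]_(n1 + n2)) : leM X Y ->
  forall (A : 'M[nat]_n1) (B : 'M[nat]_n2) s,
  packed k A -> packed k B -> mono s -> Y = shufM s (ov A B) ->
  exists A1 B1 s1, [/\ packed k A1, packed k B1, leM A1 A, leM B1 B &
                    mono s1 /\ X = shufM s1 (ov A1 B1)].
Proof.
move=> h; have {h} := clos_rt_rtn1 _ _ _ _ h; elim => [| y z hyz hxy IH] A B s pA pB ms ey.
- by exists A, B, s; split => //; exact: rt_refl.
- subst z; case: (BS pA pB ms hyz) => A1 [B1 [s1 [pA1 pB1 h1 h2 [ms1 ey]]]].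
  case: (IH A1 B1 s1 pA1 pB1 ms1 ey) => A2 [B2 [s2 [pA2 pB2 h3 h4 [ms2 ez]]]].
  exists A2, B2, s2; split => //; exact: rt_trans _ _ _ _ _ h3 h1 || exact: rt_trans _ _ _ _ _ h4 h2.
Qed.

Lemma liftL n1 n2 (B : 'M[nat]_n2) (s : {perm 'I_(n1 + n2)}) :
  (forall a b : 'I_n1, nat_of_ord b = (nat_of_ord a).+1 ->
     nat_of_ord (s (lshift n2 b)) = (nat_of_ord (s (lshift n2 a))).+1) ->
  forall A A1 : 'M[nat]_n1, leM A A1 -> leM (shufM s (ov A B)) (shufM s (ov A1 B)).
Proof.
move=> hs A A1; elim => [x y hxy | x | x y z _ IH1 _ IH2].
- case: hxy => a [b [hab [hc ->]]]; move: hab => /= hab.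
  move/cndE: hc => hc.
  have hc' : cnd (shufM s (ov x B)) (s (lshift n2 a)) (s (lshift n2 b)).
    by apply/cnd_shufM/cndLL.
  have := mstep_intro hc' (hs a b hab).
  rewrite xcol_shufM -shufM_xcol -ov_xcolL; exact: rt_step.
- exact: rt_refl.
- exact: rt_trans IH1 IH2.
Qed.

Lemma liftR n1 n2 (A : 'M[nat]_n1) (s : {perm 'I_(n1 + n2)}) :
  (forall a b : 'I_n2, nat_of_ord b = (nat_of_ord a).+1 ->
     nat_of_ord (s (rshift n1 b)) = (nat_of_ord (s (rshift n1 a))).+1) ->
  forall B B1 : 'M[nat]_n2, leM B B1 -> leM (shufM s (ov A B)) (shufM s (ov A B1)).
Proof.
move=> hs B B1; elim => [x y hxy | x | x y z _ IH1 _ IH2].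
- case: hxy => a [b [hab [hc ->]]]; move: hab => /= hab.
  move/cndE: hc => hc.
  have hc' : cnd (shufM s (ov A x)) (s (rshift n1 a)) (s (rshift n1 b)).
    by apply/cnd_shufM/cndRR.
  have := mstep_intro hc' (hs a b hab).
  rewrite xcol_shufM -shufM_xcol -ov_xcolR; exact: rt_step.
- exact: rt_refl.
- exact: rt_trans IH1 IH2.
Qed.

Lemma G1 m (f : 'I_m -> nat) L : (forall a b : 'I_m, a < b -> f a < f b) ->
  (forall x, L <= f x) -> forall x : 'I_m, L + x <= f x.
Proof.
move=> hf hL; suff H : forall k (hk : k < m), L + k <= f (Ordinal hk).
  by case=> x hx; exact: H.
elim=> [|k IH] hk; first by have := hL (Ordinal hk); lia.
have hk' : k < m by lia.
have := IH hk'; have := hf (Ordinal hk') (Ordinal hk) (ltnSn k); lia.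
Qed.

Lemma G2 m (f : 'I_m -> nat) N : (forall a b : 'I_m, a < b -> f a < f b) ->
  (forall x, f x < N) -> forall x : 'I_m, f x + (m - x) <= N.
Proof.
move=> hf hN; suff H : forall d k (hk : k < m), m - k = d -> f (Ordinal hk) + d <= N.
  by case=> x hx; exact: H.
elim=> [|d IH] k hk hd; first lia.
case: (ltnP k.+1 m) => hk1.
- have := IH _ hk1 ltac:(lia); have := hf (Ordinal hk) (Ordinal hk1) (ltnSn k); lia.
- have := hN (Ordinal hk); lia.
Qed.

Lemma sum_change m (F G : 'I_m -> nat) a0 :
  (forall a, a != a0 -> F a = G a) -> (G a0).+1 = F a0 ->
  (\sum_a G a).+1 = \sum_a F a.
Proof.
move=> h e; rewrite (bigD1 a0) //= [in RHS](bigD1 a0) //= -e.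
have E : \sum_(i < m | i != a0) F i = \sum_(i < m | i != a0) G i.
  by apply: eq_bigr => a /h.
by rewrite E addSn.
Qed.

Definition uf n1 n2 (x : 'I_(n1 + n2)) : 'I_(n1 + n2) :=
  cast_ord (addnC n2 n1)
    (match split x with inl a => rshift n2 a | inr b => lshift n1 b end).

Lemma split_l n1 n2 (a : 'I_n1) : split (lshift n2 a) = inl a.
Proof. by rewrite -[lshift n2 a]/(unsplit (inl a)) unsplitK. Qed.
Lemma split_r n1 n2 (a : 'I_n2) : split (rshift n1 a) = inr a.
Proof. by rewrite -[rshift n1 a]/(unsplit (inr a)) unsplitK. Qed.

Lemma uf_l n1 n2 (a : 'I_n1) : nat_of_ord (uf (lshift n2 a)) = n2 + a.
Proof. by rewrite /uf split_l. Qed.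
Lemma uf_r n1 n2 (a : 'I_n2) : nat_of_ord (uf (rshift n1 a)) = a.
Proof. by rewrite /uf split_r. Qed.

Lemma uf_inj n1 n2 : injective (@uf n1 n2).
Proof.
move=> x y; case: (splitLR x) => [[a ->]|[a ->]]; case: (splitLR y) => [[b ->]|[b ->]];
  move/(f_equal (@nat_of_ord _)); rewrite ?uf_l ?uf_r => e.
- by congr lshift; apply: ord_inj; lia.
- have := ltn_ord b; lia.
- have := ltn_ord a; lia.
- by congr rshift; apply: ord_inj.
Qed.

Definition uperm n1 n2 : {perm 'I_(n1 + n2)} := perm (@uf_inj n1 n2).

Lemma uperm_l n1 n2 (a : 'I_n1) : nat_of_ord (uperm n1 n2 (lshift n2 a)) = n2 + a.
Proof. by rewrite permE uf_l. Qed.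
Lemma uperm_r n1 n2 (a : 'I_n2) : nat_of_ord (uperm n1 n2 (rshift n1 a)) = a.
Proof. by rewrite permE uf_r. Qed.

Lemma mono_uperm n1 n2 : mono (uperm n1 n2).
Proof. by split => a b hab; rewrite ?uperm_l ?uperm_r //; lia. Qed.

Lemma mono1 n1 n2 : mono (1%g : {perm 'I_(n1 + n2)}).
Proof. by split => a b hab; rewrite !perm1 /=; lia. Qed.

Lemma un_shufM n1 n2 (A : 'M[nat]_n1) (B : 'M[nat]_n2) :
  un A B = shufM (uperm n1 n2) (ov A B).
Proof.
apply/matrixP => i j; rewrite -(permKV (uperm n1 n2) j) shufME /un castmxE.
set x := ((uperm n1 n2)^-1)%g j.
rewrite [cast_ord _ i](_ : _ = i); last by apply: ord_inj.
case: (splitLR x) => [[a ->]|[a ->]].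
- rewrite [cast_ord _ _](_ : _ = rshift n2 a); last by apply: ord_inj; rewrite /= uperm_l.
  case: (splitLR i) => [[r ->]|[r ->]].
  + by rewrite block_mxEur ovLL.
  + by rewrite block_mxEdr ovRL mxE.
- rewrite [cast_ord _ _](_ : _ = lshift n1 a); last by apply: ord_inj; rewrite /= uperm_r.
  case: (splitLR i) => [[r ->]|[r ->]].
  + by rewrite block_mxEul ovLR mxE.
  + by rewrite block_mxEdl ovRR.
Qed.

Lemma ov_shufM n1 n2 (A : 'M[nat]_n1) (B : 'M[nat]_n2) :
  ov A B = shufM 1%g (ov A B).
Proof. by apply/matrixP => i j; rewrite [RHS]mxE invg1 perm1. Qed.

Lemma step2 n1 n2 (s : {perm 'I_(n1 + n2)}) (a : 'I_n1) : mono s ->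
  s (lshift n2 a) < n2 + a ->
  (exists b, nat_of_ord (s (rshift n1 b)) = (nat_of_ord (s (lshift n2 a))).+1) \/
  (exists c : 'I_n1, a < c /\ s (lshift n2 c) < n2 + c).
Proof.
move=> ms ha.
have hp : (nat_of_ord (s (lshift n2 a))).+1 < n1 + n2 by have := ltn_ord a; lia.
have eq : s (s^-1%g (Ordinal hp)) = Ordinal hp by rewrite permKV.
case: (splitLR (s^-1%g (Ordinal hp))) => [[c ec]|[b eb]]; rewrite ?ec ?eb in eq.
- have e : nat_of_ord (s (lshift n2 c)) = (nat_of_ord (s (lshift n2 a))).+1 by rewrite eq.
  right; exists c.
  have hac : a < c.
    case: (ltngtP a c) => h //.
    + by move: (ms.1 c a h) => H; exfalso; lia.
    + by move: (ord_inj h) => E; subst c; exfalso; lia.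
  split => //; lia.
- have e : nat_of_ord (s (rshift n1 b)) = (nat_of_ord (s (lshift n2 a))).+1 by rewrite eq.
  by left; exists b.
Qed.

Lemma step1 n1 n2 (s : {perm 'I_(n1 + n2)}) (a : 'I_n1) : mono s ->
  a < s (lshift n2 a) ->
  (exists b, nat_of_ord (s (lshift n2 a)) = (nat_of_ord (s (rshift n1 b))).+1) \/
  (exists c : 'I_n1, c < a /\ c < s (lshift n2 c)).
Proof.
move=> ms ha.
have hp : (nat_of_ord (s (lshift n2 a))) - 1 < n1 + n2 by have := ltn_ord (s (lshift n2 a)); lia.
have eq : s (s^-1%g (Ordinal hp)) = Ordinal hp by rewrite permKV.
case: (splitLR (s^-1%g (Ordinal hp))) => [[c ec]|[b eb]]; rewrite ?ec ?eb in eq.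
- have e : nat_of_ord (s (lshift n2 c)) = (nat_of_ord (s (lshift n2 a))) - 1 by rewrite eq.
  right; exists c.
  have hac : c < a.
    case: (ltngtP a c) => h //.
    + by move: (ms.1 a c h) => H; exfalso; lia.
    + by move: (ord_inj h) => E; subst c; exfalso; lia.
  split => //; lia.
- have e : nat_of_ord (s (rshift n1 b)) = (nat_of_ord (s (lshift n2 a))) - 1 by rewrite eq.
  by left; exists b; lia.
Qed.

Lemma W2 n1 n2 (s : {perm 'I_(n1 + n2)}) : mono s -> forall a : 'I_n1,
  s (lshift n2 a) < n2 + a -> exists (a' : 'I_n1) (b' : 'I_n2),
  s (lshift n2 a') < n2 + a' /\
  nat_of_ord (s (rshift n1 b')) = (nat_of_ord (s (lshift n2 a'))).+1.
Proof.
move=> ms; suff H : forall d (a : 'I_n1), n1 - a <= d -> s (lshift n2 a) < n2 + a ->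
  exists (a' : 'I_n1) (b' : 'I_n2), s (lshift n2 a') < n2 + a' /\
  nat_of_ord (s (rshift n1 b')) = (nat_of_ord (s (lshift n2 a'))).+1.
  by move=> a; exact: H (n1 - a) a (leqnn _).
elim=> [|d IH] a hd ha; first by have := ltn_ord a; lia.
case: (step2 ms ha) => [[b hb]|[c [hac hc]]]; first by exists a, b.
by apply: (IH c) => //; lia.
Qed.

Lemma W1 n1 n2 (s : {perm 'I_(n1 + n2)}) : mono s -> forall a : 'I_n1,
  a < s (lshift n2 a) -> exists (a' : 'I_n1) (b' : 'I_n2),
  a' < s (lshift n2 a') /\
  nat_of_ord (s (lshift n2 a')) = (nat_of_ord (s (rshift n1 b'))).+1.
Proof.
move=> ms; suff H : forall d (a : 'I_n1), a <= d -> a < s (lshift n2 a) ->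
  exists (a' : 'I_n1) (b' : 'I_n2), a' < s (lshift n2 a') /\
  nat_of_ord (s (lshift n2 a')) = (nat_of_ord (s (rshift n1 b'))).+1.
  by move=> a0; exact: (H (nat_of_ord a0) a0 (leqnn _)).
elim=> [|d IH] a hd ha.
- case: (step1 ms ha) => [[b hb]|[c [hac hc]]]; first by exists a, b.
  lia.
- case: (step1 ms ha) => [[b hb]|[c [hac hc]]]; first by exists a, b.
  by apply: (IH c) => //; lia.
Qed.

Lemma M2 n1 n2 (A : 'M[nat]_n1) (B : 'M[nat]_n2) s : mono s ->
  leM (shufM s (ov A B)) (shufM (uperm n1 n2) (ov A B)).
Proof.
move=> ms.
suff H : forall d s, mono s ->
    \sum_(a < n1) (n2 + a - s (lshift n2 a)) = d ->
    leM (shufM s (ov A B)) (shufM (uperm n1 n2) (ov A B)) by exact: H _ s ms erefl.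
elim=> [|d IH] {ms}s ms hd.
- have hge : forall a : 'I_n1, n2 + a <= s (lshift n2 a).
    by move=> a; rewrite (bigD1 a) //= in hd; lia.
  have hle : forall a : 'I_n1, s (lshift n2 a) <= n2 + a.
    move=> a; have := G2 (f := fun a => nat_of_ord (s (lshift n2 a))) (N := n1 + n2) ms.1.
    by move=> /(_ (fun x => ltn_ord _) a) /=; have := ltn_ord a; lia.
  have hR : forall b : 'I_n2, s (rshift n1 b) < n2.
    move=> b; rewrite ltnNge; apply/negP => hb.
    have hc : s (rshift n1 b) - n2 < n1 by have := ltn_ord (s (rshift n1 b)); lia.
    have : s (lshift n2 (Ordinal hc)) = s (rshift n1 b).
      by apply: ord_inj; have := hge (Ordinal hc); have := hle (Ordinal hc); rewrite /=; lia.
    by move/perm_inj/eqP; rewrite (negbTE (lsh_neq_rsh _ _)).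
  have hRle : forall b : 'I_n2, s (rshift n1 b) <= b.
    move=> b; have := G2 (f := fun b => nat_of_ord (s (rshift n1 b))) (N := n2) ms.2 hR b.
    by rewrite /=; have := ltn_ord b; lia.
  have hRge : forall b : 'I_n2, b <= s (rshift n1 b).
    move=> b; have := G1 (f := fun b => nat_of_ord (s (rshift n1 b))) (L := 0) ms.2 (fun _ => leq0n _) b.
    by rewrite /=; lia.
  have -> : s = uperm n1 n2.
    apply/permP => x; apply: ord_inj.
    case: (splitLR x) => [[a ->]|[b ->]]; rewrite ?uperm_l ?uperm_r.
    + by have := hge a; have := hle a; lia.
    + by have := hRge b; have := hRle b; lia.
  exact: rt_refl.
- have [a ha] : exists a : 'I_n1, s (lshift n2 a) < n2 + a.
    case: (boolP [exists a : 'I_n1, s (lshift n2 a) < n2 + a]) => [/existsP //|/existsP hn].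
    exfalso; move: hd; rewrite big1 // => x _.
    apply/eqP; rewrite subn_eq0 leqNgt; apply/negP => h; apply: hn; by exists x.
  case: (W2 ms ha) => a' [b' [ha' hb']].
  have ms' := mono_swapLR ms hb' erefl erefl.
  apply: rt_trans (IH _ ms' _).
  + apply: rt_step.
    have hc : cnd (shufM s (ov A B)) (s (lshift n2 a')) (s (rshift n1 b')).
      by apply/cnd_shufM/cndLR.
    rewrite -xcol_shufM; exact: mstep_intro hc hb'.
  + apply/eq_add_S; rewrite -hd; apply: (sum_change (a0 := a')).
    * move=> x haa; rewrite permM tpermD //.
      - by rewrite (inj_eq perm_inj) (inj_eq (@lshift_inj _ _)) eq_sym.
      - by rewrite (inj_eq perm_inj) eq_sym lsh_neq_rsh.
    * rewrite permM tpermL; lia.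
Qed.

Lemma M1 n1 n2 (A : 'M[nat]_n1) (B : 'M[nat]_n2) s : mono s ->
  leM (shufM 1%g (ov A B)) (shufM s (ov A B)).
Proof.
move=> ms.
suff H : forall d s, mono s ->
    \sum_(a < n1) (s (lshift n2 a) - a) = d ->
    leM (shufM 1%g (ov A B)) (shufM s (ov A B)) by exact: H _ s ms erefl.
elim=> [|d IH] {ms}s ms hd.
- have hle : forall a : 'I_n1, s (lshift n2 a) <= a.
    by move=> a; rewrite (bigD1 a) //= in hd; lia.
  have hge : forall a : 'I_n1, a <= s (lshift n2 a).
    move=> a; have := G1 (f := fun a => nat_of_ord (s (lshift n2 a))) (L := 0) ms.1 (fun _ => leq0n _) a.
    by rewrite /=; lia.
  have hR : forall b : 'I_n2, n1 <= s (rshift n1 b).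
    move=> b; rewrite leqNgt; apply/negP => hb.
    have : s (lshift n2 (Ordinal hb)) = s (rshift n1 b).
      by apply: ord_inj; have := hge (Ordinal hb); have := hle (Ordinal hb); rewrite /=; lia.
    by move/perm_inj/eqP; rewrite (negbTE (lsh_neq_rsh _ _)).
  have hRle : forall b : 'I_n2, s (rshift n1 b) <= n1 + b.
    move=> b; have := G2 (f := fun b => nat_of_ord (s (rshift n1 b))) (N := n1 + n2) ms.2.
    by move=> /(_ (fun x => ltn_ord _) b) /=; have := ltn_ord b; lia.
  have hRge : forall b : 'I_n2, n1 + b <= s (rshift n1 b).
    move=> b; exact: (G1 (f := fun b => nat_of_ord (s (rshift n1 b))) (L := n1) ms.2 hR b).
  have -> : s = 1%g.
    apply/permP => x; apply: ord_inj; rewrite perm1.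
    case: (splitLR x) => [[a ->]|[b ->]] /=.
    + by have := hge a; have := hle a; lia.
    + by have := hRge b; have := hRle b; lia.
  exact: rt_refl.
- have [a ha] : exists a : 'I_n1, a < s (lshift n2 a).
    case: (boolP [exists a : 'I_n1, a < s (lshift n2 a)]) => [/existsP //|/existsP hn].
    exfalso; move: hd; rewrite big1 // => x _.
    apply/eqP; rewrite subn_eq0 leqNgt; apply/negP => h; apply: hn; by exists x.
  case: (W1 ms ha) => a' [b' [ha' hb']].
  have ms' := mono_swapRL ms hb' erefl erefl.
  apply: rt_trans (IH _ ms' _) _.
  + apply/eq_add_S; rewrite -hd; apply: (sum_change (a0 := a')).
    * move=> x haa; rewrite permM tpermD //.
      - by rewrite (inj_eq perm_inj) eq_sym lsh_neq_rsh.
      - by rewrite (inj_eq perm_inj) (inj_eq (@lshift_inj _ _)) eq_sym.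
    * rewrite permM tpermR; lia.
  + apply: rt_step.
    set s' := (s * tperm (s (rshift n1 b')) (s (lshift n2 a')))%g.
    have e1 : s' (lshift n2 a') = s (rshift n1 b') by rewrite permM tpermR.
    have e2 : s' (rshift n1 b') = s (lshift n2 a') by rewrite permM tpermL.
    have hc : cnd (shufM s' (ov A B)) (s (rshift n1 b')) (s (lshift n2 a')).
      by rewrite -e1 -e2; apply/cnd_shufM/cndLR.
    have := mstep_intro hc hb'.
    by rewrite xcol_shufM /s' -mulgA tperm2 mulg1.
Qed.

Unset Implicit Arguments.
Set Strict Implicit.

Theorem lemma2p1 (k n1 n2 : nat) (M : 'M[nat]_(n1 + n2))
    (A : 'M[nat]_n1) (B : 'M[nat]_n2) :
  packed k M -> packed k A -> packed k B ->
  (leM (ov A B) M <->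
     exists (A' : 'M[nat]_n1) (B' : 'M[nat]_n2),
       [/\ packed k A', packed k B', leM A A', leM B B' & in_Shc M A' B'])
  /\
  (leM M (un A B) <->
     exists (A' : 'M[nat]_n1) (B' : 'M[nat]_n2),
       [/\ packed k A', packed k B', leM A' A, leM B' B & in_Shc M A' B']).
Proof.
move=> pM pA pB.
have h1L : forall a b : 'I_n1, nat_of_ord b = (nat_of_ord a).+1 ->
    nat_of_ord ((1%g : {perm 'I_(n1 + n2)}) (lshift n2 b)) =
    (nat_of_ord ((1%g : {perm 'I_(n1 + n2)}) (lshift n2 a))).+1.
  by move=> a b hab; rewrite !perm1 /=; lia.
have h1R : forall a b : 'I_n2, nat_of_ord b = (nat_of_ord a).+1 ->
    nat_of_ord ((1%g : {perm 'I_(n1 + n2)}) (rshift n1 b)) =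
    (nat_of_ord ((1%g : {perm 'I_(n1 + n2)}) (rshift n1 a))).+1.
  by move=> a b hab; rewrite !perm1 /=; lia.
have huL : forall a b : 'I_n1, nat_of_ord b = (nat_of_ord a).+1 ->
    nat_of_ord (uperm n1 n2 (lshift n2 b)) = (nat_of_ord (uperm n1 n2 (lshift n2 a))).+1.
  by move=> a b hab; rewrite !uperm_l; lia.
have huR : forall a b : 'I_n2, nat_of_ord b = (nat_of_ord a).+1 ->
    nat_of_ord (uperm n1 n2 (rshift n1 b)) = (nat_of_ord (uperm n1 n2 (rshift n1 a))).+1.
  by move=> a b hab; rewrite !uperm_r; lia.
split; split.
- move=> h; have := FC h pA pB (mono1 n1 n2) (ov_shufM A B).
  case=> A1 [B1 [s1 [pA1 pB1 hA hB [ms1 e]]]].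
  by exists A1, B1; split => //; rewrite e; exact: shc_of.
- case=> A1 [B1 [pA1 pB1 hA hB hs]]; case: (shc_to hs) => s [ms ->].
  rewrite (ov_shufM A B).
  apply: rt_trans (liftL B h1L hA) _.
  apply: rt_trans (liftR A1 h1R hB) _.
  exact: M1.
- rewrite un_shufM => h.
  have := BC h pA pB (mono_uperm n1 n2) erefl.
  case=> A1 [B1 [s1 [pA1 pB1 hA hB [ms1 e]]]].
  by exists A1, B1; split => //; rewrite e; exact: shc_of.
- case=> A1 [B1 [pA1 pB1 hA hB hs]]; case: (shc_to hs) => s [ms ->].
  rewrite un_shufM.
  apply: rt_trans (M2 A1 B1 ms) _.
  apply: (rt_trans _ _ _ _ _ (liftR A1 huR hB)).
  exact: (liftL B huL hA).
Qed.
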